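(* Let $p$ be an odd prime and $k,m$ positive integers, and let $n$ be a positive integer dividing $p^{km}+1$ with $\frac{p^{km}+1}{n}$ odd. Let $\mathbb{F}_p(\eta)$ be an extension of $\mathbb{F}_p$ of degree $k$, and let $\sigma$ be its Frobenius automorphism. Let $g(X)$ and $h(X,\eta)$ be coprime factors of $X^n+1$ such that: (1) $g(X)$ is a factor of $X^n+1$ over $\mathbb{F}_p$ with $g(-X)=g(X)$, and $g$ is divisible by every irreducible factor of $X^n+1$ over $\mathbb{F}_p$ whose degree is not divisible by $k$; (2) $h(X,\eta)$ is a factor of $\frac{X^n+1}{g}$ over $\mathbb{F}_p(\eta)$ with $h(-X,\eta)=h(X,\eta)$, such that for every irreducible factor $r(X,\eta)$ of $\frac{X^n+1}{g}$ over $\mathbb{F}_p(\eta)$, $r$ divides $h$ if and only if none of $\sigma^i(r)$, $i=1,\dots,k-1$, divides $h$; i.e. $\frac{X^n+1}{g}=\prod_{i=0}^{k-1}\sigma^i(h)$. Choose any nonzero $\alpha\in\mathbb{F}_p$, and let $a(X,\eta)$ be the polynomial modulo $X^n+1$ uniquely determined by the Chinese remainder theorem via $$a\equiv 1\mod g,\qquad a\equiv\sigma^i(\alpha\eta)\mod \sigma^i(h)\quad\text{for all }0\le i<k.$$ Then $a(X,\eta)$ lies in $\mathbb{F}_p[X]$ (modulo $X^n+1$), and the uniquely negacyclic subspace $S=\{(ug,\,uag): u\in\mathcal{R}\}$ of $\mathcal{R}\times\mathcal{R}\cong\mathbb{F}_p^n\times\mathbb{F}_p^n$ generated by $(g,ag)$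 is totally isotropic.
   Context: $\mathcal{R}=\mathbb{F}_p[X]/\langle X^n+1\rangle$, identified with $\mathbb{F}_p^n$ via $(a_0,\dots,a_{n-1})\mapsto\sum a_iX^i$. $\sigma$ is the Frobenius automorphism $\beta\mapsto\beta^p$ of $\mathbb{F}_p(\eta)$, extended coefficientwise to polynomials. The symplectic inner product on $\mathbb{F}_p^n\times\mathbb{F}_p^n$ is $\langle(\mathbf{a},\mathbf{b}),(\mathbf{c},\mathbf{d})\rangle_s=\mathbf{a}^T\mathbf{d}-\mathbf{b}^T\mathbf{c}$, and a subset is totally isotropic if this vanishes for all pairs of its elements. *)

(* Defs.v *)
From HB Require Import structures.
From mathcomp Require Import all_boot all_order all_algebra all_field.
Set Implicit Arguments. Unset Strict Implicit. Unset Printing Implicit Defensive.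
Import GRing.Theory.
Local Open Scope ring_scope.

Definition negmod (F : nzRingType) (n : nat) : {poly F} := 'X^n + 1.

Definition ncoef (F : fieldType) (n : nat) (f : {poly F}) (i : 'I_n) : F :=
  (f %% negmod F n)`_i.
Arguments ncoef {F} n f i.

Definition symp (F : fieldType) (n : nat) (x y : {poly F} * {poly F}) : F :=
  \sum_(i < n) (ncoef n x.1 i * ncoef n y.2 i - ncoef n x.2 i * ncoef n y.1 i).
Arguments symp {F} n x y.

Definition negacyclic_span (F : fieldType) (n : nat) (g b : {poly F})
  (x : {poly F} * {poly F}) : Prop :=
  exists u : {poly F}, x = ((u * g) %% negmod F n, (u * b * g) %% negmod F n).

Definition totally_isotropic (F : fieldType) (n : nat)
  (S : {poly F} * {poly F} -> Prop) : Prop :=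
  forall x y, S x -> S y -> symp n x y = 0.

Definition frobi (L : fieldType) (p i : nat) (x : L) : L := x ^+ (p ^ i).
Definition polyfrob (L : fieldType) (p i : nat) (r : {poly L}) : {poly L} :=
  map_poly (frobi p i) r.
Arguments negacyclic_span {F} n g b x.
Arguments totally_isotropic {F} n S.

(* Main.v *)
Require Import Defs.
From HB Require Import structures.
From mathcomp Require Import all_boot all_order all_algebra all_field.
From Stdlib Require Import Classical.
From mathcomp Require Import ring zify.
Import GRing.Theory.
Local Open Scope ring_scope.

Section PolyAux.
Variable F : fieldType.
Implicit Types q r s : {poly F}.

Lemma irr_exists q : (1 < size q)%N -> exists r, irreducible_poly r /\ r %| q.
Proof.
move: {2}(size q) (leqnn (size q)) => N; elim: N q => [|N IH] q Hq Hq1.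
  by move: (leq_trans Hq1 Hq).
have [irr|nirr] := classic (irreducible_poly q).
  by exists q; split.
have H0: ~ (forall s, size s != 1%N -> s %| q -> s %= q).
  by move=> H; apply: nirr; split.
have [s Hs] := not_all_ex_not _ _ H0.
have [s1 Hs2] := imply_to_and _ _ Hs.
have [sq seq] := imply_to_and _ _ Hs2.
have seq0 : ~~ (s %= q) by apply/negP.
have q0 : q != 0 by rewrite -size_poly_gt0 (@ltn_trans 1%N).
have s0 : s != 0 by apply: contra_neq q0 => s0; move: sq; rewrite s0 dvd0p => /eqP.
have ss : (size s < size q)%N.
  rewrite ltn_neqAle dvdp_leq // andbT; apply/negP => /eqP E.
  by move: seq0; rewrite -dvdp_size_eqp // E eqxx.
have s1' : (1 < size s)%N.
  by rewrite ltn_neqAle eq_sym s1 /= size_poly_gt0.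
have [r [ir rs]] := IH s (leq_trans (ltnSn _) (leq_trans ss Hq)) s1'.
by exists r; split => //; apply: dvdp_trans sq.
Qed.

Lemma irr_coprime r u : irreducible_poly r -> ~~ (r %| u) -> coprimep r u.
Proof.
move=> ir nru; have [g1|gr] := irredp_XsubCP ir (dvdp_gcdl r u).
  by rewrite -gcdp_eqp1.
by move: nru; rewrite -(eqp_dvdl _ gr) dvdp_gcdr.
Qed.

Lemma irr_prime r u v : irreducible_poly r -> r %| u * v -> r %| u \/ r %| v.
Proof.
move=> ir ruv; have [ru|nru] := boolP (r %| u); first by left.
by right; move: ruv; rewrite Gauss_dvdpr //; apply: irr_coprime.
Qed.

Lemma sqfree_dvd P G : separable_poly P ->
  (forall r, irreducible_poly r -> r %| P -> r %| G) -> P %| G.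
Proof.
move: {2}(size P) (leqnn (size P)) => N; elim: N P => [|N IH] P HP sP H.
  by move: (separable_poly_neq0 sP); rewrite -size_poly_gt0 leqNgt ltnS HP.
have [sP1|sP1] := leqP (size P) 1.
  have P0 := separable_poly_neq0 sP.
  have: size P = 1%N by apply/eqP; rewrite eqn_leq sP1 size_poly_gt0.
  by move/eqP; rewrite size_poly_eq1 => /eqp_dvdl ->; rewrite dvd1p.
have [r [ir rP]] := irr_exists _ sP1.
have P0 := separable_poly_neq0 sP.
have EP := divpK rP.
have r0 := irredp_neq0 ir.
have sQ : separable_poly (P %/ r) by apply: (dvdp_separable _ sP); exact: divp_dvd.
have cQ : coprimep (P %/ r) r by apply: (separable_coprime sP); rewrite EP.
rewrite -EP Gauss_dvdp // (H r) // andbT.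
apply: IH => // [|s irs sQ'].
  rewrite -ltnS (leq_trans _ HP) // -{2}EP.
  have Q0 : P %/ r != 0 by apply: contra_neq P0 => Q0; rewrite -EP Q0 mul0r.
  rewrite size_mul //; have r2 : (1 < size r)%N by case: ir.
  move: r2; case: (size r) => [|[|k]] //= _; rewrite !addnS /=.
  by rewrite ltnS leq_addr.
by apply: H => //; apply: dvdp_trans sQ' _; exact: divp_dvd.
Qed.

Lemma separable_negmod n : (0 < n)%N -> n%:R != 0 :> F -> separable_poly (negmod F n).
Proof.
move=> n0 nF; rewrite unlock /negmod.
apply/Bezout_coprimepP; exists (1, - ((n%:R)^-1 *: 'X)) => /=.
rewrite derivD derivC addr0 derivXn mul1r.
have -> : - ((n%:R)^-1 *: 'X) * ('X^(n.-1) *+ n) = - 'X^n :> {poly F}.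
  rewrite mulNr -scalerAl -scaler_nat -scalerAr scalerA mulVf // scale1r.
  by rewrite -exprS prednK.
by rewrite addrC addKr eqpxx.
Qed.

Lemma dvdp_powB (P x y : {poly F}) N : P %| x - y -> P %| x ^+ N - y ^+ N.
Proof. by move=> H; rewrite subrXX dvdp_mulr. Qed.

Lemma dvdp_compB (P q u w : {poly F}) : P %| u - w -> P %| (q \Po u) - (q \Po w).
Proof.
move=> H; elim/poly_ind: q => [|q c IH]; first by rewrite !comp_poly0 subrr dvdp0.

rewrite !comp_poly_MXaddC.
have -> : (q \Po u) * u + c%:P - ((q \Po w) * w + c%:P)
   = ((q \Po u) - (q \Po w)) * u + (q \Po w) * (u - w) by ring.
by apply: dvdp_add; [apply: dvdp_mulr | apply: dvdp_mull].
Qed.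

Lemma modp_congr (P u w : {poly F}) : P %| u - w -> u %% P = w %% P.
Proof.
move=> /modp_eq0 H; apply/eqP; rewrite -subr_eq0 -modpN -modpD; exact/eqP.
Qed.

Arguments modp_congr {P u w}.
Arguments dvdp_powB {P x y}.
Arguments dvdp_compB {P} q {u w}.

Lemma Xmod n m : (0 < n)%N ->
  'X^m %% negmod F n = ((-1) ^+ (m %/ n) *: 'X^(m %% n)).
Proof.
move=> n0; rewrite [in LHS](divn_eq m n) exprD.
rewrite (@modp_congr _ _ ((-1) ^+ (m %/ n) *: 'X^(m %% n))).
  rewrite modp_small // size_scale ?signr_eq0 // size_polyXn /negmod.
  by rewrite size_polyDl ?size_polyXn ?size_polyC ?ltnS ?ltn_pmod //; case: (n) n0 => [|[|]] //; rewrite oner_eq0.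
rewrite -mul_polyC -mulrBl dvdp_mulr // mulnC exprM.
have -> : ((-1) ^+ (m %/ n))%:P = (-1 : {poly F}) ^+ (m %/ n) by rewrite rmorphXn rmorphN rmorph1.
by apply: dvdp_powB; rewrite /negmod opprK.
Qed.

Definition Tn n (f : {poly F}) := (f %% negmod F n)`_0.
Definition Jn n (f : {poly F}) := f \Po (- 'X^(n.-1)).

Lemma Tn_congr n f h : negmod F n %| f - h -> Tn n f = Tn n h.
Proof. by move=> H; rewrite /Tn (modp_congr H). Qed.

Lemma Tn_add n : {morph Tn n : x y / x + y}.
Proof. by move=> x y; rewrite /Tn modpD coefD. Qed.

Lemma Tn0 n : Tn n 0 = 0.
Proof. by rewrite /Tn mod0p coef0. Qed.

Lemma TnZ n c f : Tn n (c *: f) = c * Tn n f.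
Proof. by rewrite /Tn modpZl coefZ. Qed.

Lemma TnN n f : Tn n (- f) = - Tn n f.
Proof. by rewrite /Tn modpN coefN. Qed.

Lemma Tn_dvd n f : negmod F n %| f -> Tn n f = 0.
Proof. by move=> /modp_eq0 H; rewrite /Tn H coef0. Qed.

Lemma comp_Xn j q : 'X^j \Po q = q ^+ j.
Proof. by elim: j => [|j IH]; rewrite ?expr0 ?comp_polyC // !exprS comp_polyM comp_polyX IH. Qed.

Lemma TXJX n i j : (i < n)%N -> (j < n)%N ->
  Tn n ('X^i * Jn n 'X^j) = (i == j)%:R.
Proof.
move=> ilt jlt; have n0 : (0 < n)%N by apply: leq_ltn_trans ilt.
rewrite /Jn comp_Xn exprNn.
have -> : (-1 : {poly F}) ^+ j = ((-1) ^+ j)%:P by rewrite rmorphXn rmorphN rmorph1.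
rewrite mulrCA -exprM -exprD mul_polyC TnZ /Tn Xmod // coefZ coefXn.
set m := (i + _)%N.
have Hmj : (m + j = i + j * n)%N.
  by rewrite /m -addnA -mulSnr prednK // mulnC.
have [eij|nij] := eqVneq i j.
  subst j; have -> : m = (i * n)%N.
    by apply/eqP; rewrite -(eqn_add2r i) Hmj addnC.
  rewrite mulnK // modnMl eqxx mulr1.
  by rewrite -exprMn mulrNN mulr1 expr1n.
have -> : (0%N == m %% n)%N = false; last by rewrite !mulr0.
apply/negP => /eqP mn0; move/negP: nij; apply; apply/eqP.
have := congr1 (modn^~ n) Hmj; rewrite -modnDml -mn0 add0n addnC modnMDl.
by rewrite !modn_small.
Qed.


Lemma PJ n : (0 < n)%N -> negmod F n %| Jn n (negmod F n).
Proof.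
move=> n0; rewrite /Jn /negmod comp_polyD comp_polyC comp_Xn exprNn -exprM.
have -> : (-1 : {poly F}) ^+ n = ((-1) ^+ n)%:P by rewrite rmorphXn rmorphN rmorph1.
rewrite /dvdp modpD mul_polyC modpZl (Xmod _ _ n0) mulnK // modnMl expr0.
rewrite (modp_small (p := 1)); last first.
  by rewrite size_polyC oner_eq0 /negmod size_polyDl ?size_polyXn ?size_polyC ?oner_eq0 // ltnS.
rewrite scalerA -exprD -{1}(prednK n0) addSn exprS mulN1r addnn -signr_odd odd_double expr0.
by rewrite scaleN1r addNr.
Qed.

Lemma poly_expand n (q : {poly F}) : (size q <= n)%N -> q = \sum_(i < n) q`_i *: 'X^i.
Proof.
move=> sq; rewrite -poly_def; apply/polyP => i; rewrite coef_poly.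
by case: ltnP => // ni; rewrite nth_default // (leq_trans sq ni).
Qed.

Lemma Jn_add n : {morph Jn n : x y / x + y}.
Proof. by move=> x y; rewrite /Jn comp_polyD. Qed.

Lemma Jn_mul n : {morph Jn n : x y / x * y}.
Proof. by move=> x y; rewrite /Jn comp_polyM. Qed.

Lemma Bform n f h : (0 < n)%N ->
  \sum_(i < n) (f %% negmod F n)`_i * (h %% negmod F n)`_i = Tn n (f * Jn n h).
Proof.
move=> n0; set P := negmod F n.
have sP : size P = n.+1.
  by rewrite /P /negmod size_polyDl ?size_polyXn ?size_polyC ?oner_eq0 // ltnS.
have P0 : P != 0 by rewrite -size_poly_gt0 sP.
have -> : Tn n (f * Jn n h) = Tn n ((f %% P) * Jn n (h %% P)).
  apply: Tn_congr.
  have Ef := divp_eq f P; have Eh := divp_eq h P.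
  have -> : f * Jn n h - (f %% P) * Jn n (h %% P)
     = (f %/ P * P) * Jn n h + (f %% P) * Jn n (h %/ P) * Jn n P.
    have Jh : Jn n h = Jn n (h %/ P) * Jn n P + Jn n (h %% P) by rewrite {1}Eh Jn_add Jn_mul.
    by rewrite {1}Ef Jh; ring.
  apply: dvdp_add; first by rewrite -mulrA; apply: dvdp_mull; apply: dvdp_mulr.
  by apply: dvdp_mull; apply: PJ.
have sf : (size (f %% P)%R <= n)%N by rewrite -ltnS -sP ltn_modp.
have sh : (size (h %% P)%R <= n)%N by rewrite -ltnS -sP ltn_modp.
rewrite [in RHS](poly_expand _ _ sf) [in RHS](poly_expand _ _ sh).
rewrite (big_morph (Jn n) (Jn_add n) (comp_poly0 _)) big_distrl /=.
rewrite (big_morph (Tn n) (Tn_add n) (Tn0 n)); apply: eq_bigr => i _.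
rewrite big_distrr /= (big_morph (Tn n) (Tn_add n) (Tn0 n)).
rewrite (bigD1 i) //= big1 ?addr0.
  by rewrite /Jn comp_polyZ -scalerAl -scalerAr !TnZ -/(Jn n _) TXJX // eqxx mulr1 mulrC.
move=> j nji; rewrite /Jn comp_polyZ -scalerAl -scalerAr !TnZ -/(Jn n _) TXJX //.
have /negPf -> : (i : nat) != j by rewrite eq_sym.
by rewrite !mulr0.
Qed.

Lemma symp0 n (g b u v : {poly F}) : (0 < n)%N -> negmod F n %| Jn n b - b ->
  symp n ((u * g) %% negmod F n, (u * b * g) %% negmod F n)
         ((v * g) %% negmod F n, (v * b * g) %% negmod F n) = 0.
Proof.
move=> n0 Hb; rewrite /symp /ncoef /= !modp_id sumrB !Bform //.
rewrite -TnN -Tn_add; apply: Tn_dvd.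
have -> : u * g * Jn n (v * b * g) - u * b * g * Jn n (v * g)
   = (u * g * Jn n v * Jn n g) * (Jn n b - b) by rewrite !Jn_mul; ring.
by rewrite dvdp_mull.
Qed.

End PolyAux.
Section Fp.
Variables (p : nat) (pr_p : prime p).

Lemma Fp_pow (c : 'F_p) j : c ^+ (p ^ j) = c.
Proof.
elim: j => [|j IH]; first by rewrite expr1.
rewrite expnSr exprM IH.
by have := @expf_card _ c; rewrite card_Fp.
Qed.

Lemma polyFp_add j (x y : {poly 'F_p}) : (x + y) ^+ (p ^ j) = x ^+ (p ^ j) + y ^+ (p ^ j).
Proof.
apply: exprDn_pchar.
have chP : p \in [pchar {poly 'F_p}] by rewrite pchar_poly pchar_Fp.
by rewrite (eq_pnat _ (pcharf_eq chP)) pnatX pnat_id.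
Qed.

Lemma frob_comp (q w : {poly 'F_p}) j : (q \Po w) ^+ (p ^ j) = q \Po (w ^+ (p ^ j)).
Proof.
elim/poly_ind: q => [|q c IH].
  by rewrite !comp_poly0 expr0n expn_eq0 -leqn0 leqNgt prime_gt0.
rewrite !comp_poly_MXaddC polyFp_add exprMn IH.
by rewrite -rmorphXn Fp_pow.
Qed.

Lemma Jb n N q (b : {poly 'F_p}) j : (0 < n)%N -> N = (p ^ j)%N ->
  (N + 1 = n * q)%N -> odd q -> odd N ->
  negmod _ n %| b \Po (- 'X) - b -> negmod _ n %| b ^+ N - b ->
  negmod _ n %| Jn _ n b - b.
Proof.
move=> n0 EN Enq oq oN HA HB.
have q0 : (0 < q)%N by case: (q) oq.
have EN2 : N = ((q.-1) * n + n.-1)%N.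
  rewrite -(prednK q0) -(prednK n0) /= in Enq *.
  by move: Enq; rewrite mulnS mulSn /=; lia.
have HX : negmod 'F_p n %| 'X^N - 'X^(n.-1).
  have nlt : (n.-1 < n)%N by rewrite ltn_predL.
  apply/modp_eq0P; rewrite modpD modpN Xmod // EN2 divnMDl // modnMDl.
  rewrite (divn_small nlt) (modn_small nlt) addn0.
  have -> : (-1 : 'F_p) ^+ q.-1 = 1.
    by rewrite -signr_odd; case: (q) oq => //= q' /negPf ->.
  rewrite scale1r modp_small ?subrr //.
  by rewrite size_polyXn /negmod size_polyDl ?size_polyXn ?size_polyC ?oner_eq0 // prednK.
have -> : Jn _ n b - b = ((b \Po (- 'X^(n.-1))) - (b \Po ((- 'X) ^+ N)))
   + (((b \Po (- 'X)) ^+ N) - b ^+ N) + (b ^+ N - b).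
  rewrite EN -frob_comp /Jn; ring.
apply: dvdp_add; last exact: HB.
apply: dvdp_add; last exact: dvdp_powB.
apply: dvdp_compB.
rewrite exprNn -signr_odd oN expr1 mulN1r opprK addrC.
exact: HX.
Qed.
End Fp.
Section Frob.
Variables (p : nat) (pr_p : prime p) (L : fieldExtType 'F_p).

Lemma pcharL : p \in [pchar L].
Proof. by rewrite (pchar_lalg L) pchar_Fp. Qed.

Lemma frobi_add i (x y : L) : frobi p i (x + y) = frobi p i x + frobi p i y.
Proof.
rewrite /frobi; apply: exprDn_pchar.
rewrite (eq_pnat _ (pcharf_eq pcharL)) pnatX pnat_id //.
Qed.

Lemma frobi_is_nmod i : nmod_morphism (frobi p i : L -> L).
Proof. by split=> [|x y]; [rewrite /frobi expr0n expn_eq0 -leqn0 leqNgt prime_gt0 | exact: frobi_add]. Qed.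

Lemma frobi_is_monoid i : monoid_morphism (frobi p i : L -> L).
Proof. by split=> [|x y]; rewrite /frobi ?expr1n // exprMn. Qed.

HB.instance Definition _ i := GRing.isNmodMorphism.Build L L (frobi p i) (frobi_is_nmod i).
HB.instance Definition _ i := GRing.isMonoidMorphism.Build L L (frobi p i) (frobi_is_monoid i).

Lemma cardL : #|finvect_type L| = (p ^ \dim {: L})%N.
Proof.
have E1 : #|finvect_type L| = (#|'F_p| ^ \dim {: L})%N.
  rewrite -(@card_vspacef _ _ (Vector.class (finvect_type L))).
  exact: (@card_vspace _ _ (Vector.class (finvect_type L))).
by rewrite E1 card_Fp.
Qed.

Lemma frobL (x : L) : x ^+ (p ^ \dim {: L}) = x.
Proof. rewrite -cardL. exact: (@expf_card (FinFieldExtType L) x). Qed.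

Lemma frobiK (x : L) : frobi p (\dim {: L}) x = x.
Proof. exact: frobL. Qed.

Lemma frobiD i j (x : L) : frobi p i (frobi p j x) = frobi p (j + i) x.
Proof. by rewrite /frobi -exprM expnD. Qed.

Lemma frobi0 (x : L) : frobi p 0 x = x.
Proof. by rewrite /frobi expn0 expr1. Qed.

Lemma frobi_alg i (t : 'F_p) : frobi p i (in_alg L t) = in_alg L t.
Proof. by rewrite /frobi -rmorphXn Fp_pow. Qed.

Lemma pf_dvd i (r s : {poly L}) : r %| s -> polyfrob p i r %| polyfrob p i s.
Proof. by rewrite /polyfrob dvdp_map. Qed.

Lemma pfD i j (r : {poly L}) : polyfrob p i (polyfrob p j r) = polyfrob p (j + i) r.
Proof. by rewrite /polyfrob -map_poly_comp; apply: eq_map_poly => x /=; rewrite frobiD. Qed.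

Lemma pf_id i (r : {poly L}) : (forall x : L, frobi p i x = x) -> polyfrob p i r = r.
Proof. by move=> H; rewrite /polyfrob (eq_map_poly H) map_poly_id. Qed.

Lemma pf_alg i (g : {poly 'F_p}) : polyfrob p i (map_poly (in_alg L) g) = map_poly (in_alg L) g.
Proof. by rewrite /polyfrob -map_poly_comp; apply: eq_map_poly => x /=; rewrite frobi_alg. Qed.

Lemma pf_comp i (r : {poly L}) : polyfrob p i (r \Po (- 'X)) = polyfrob p i r \Po (- 'X).
Proof. by rewrite /polyfrob map_comp_poly rmorphN /= map_polyX. Qed.

Lemma pf_subC i (r : {poly L}) c : polyfrob p i (r - c%:P) = polyfrob p i r - (frobi p i c)%:P.
Proof. by rewrite /polyfrob rmorphB /= map_polyC. Qed.

Lemma pf_sub1 i (r : {poly L}) : polyfrob p i (r - 1) = polyfrob p i r - 1.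
Proof. by rewrite /polyfrob rmorphB /= rmorph1. Qed.

Lemma pf_negmod i n : polyfrob p i (negmod L n) = negmod L n.
Proof. by rewrite /polyfrob /negmod rmorphD /= map_polyXn rmorph1. Qed.

Lemma pf_modp i (a P : {poly L}) : polyfrob p i (a %% P) = polyfrob p i a %% polyfrob p i P.
Proof. by rewrite /polyfrob map_modp. Qed.


Lemma fixed_alg (x : L) : x ^+ p = x -> exists t : 'F_p, in_alg L t = x.
Proof.
move=> xp.
have := congr1 (fun P => (map_poly (in_alg L) P).[x]) (finField_genPoly 'F_p).
rewrite /= rmorphB /= map_polyXn map_polyX rmorph_prod /= card_Fp //.
rewrite !hornerE horner_prod xp subrr => /esym /eqP /prodf_eq0 [t _].
rewrite map_polyXsubC hornerXsubC subr_eq0 => /eqP ->.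
by exists t.
Qed.


Lemma main_L
  (k m n : nat)
  (odd_p : odd p) (k_gt0 : (0 < k)%N) (m_gt0 : (0 < m)%N)
  (n_gt0 : (0 < n)%N)
  (n_dvd : (n %| p ^ (k * m) + 1)%N) (odd_quot : odd ((p ^ (k * m) + 1) %/ n))
  (dimL : \dim {: L} = k)
  (eta : L)
  (g : {poly 'F_p}) (h : {poly L})
  (g_dvd : g %| negmod 'F_p n)
  (g_even : g \Po (- 'X) = g)
  (h_dvd : h %| negmod L n %/ map_poly (in_alg L) g)
  (h_even : h \Po (- 'X) = h)
  (h_orbit : forall r : {poly L}, irreducible_poly r ->
       r %| negmod L n %/ map_poly (in_alg L) g ->
       (r %| h <-> (forall i : nat, (0 < i < k)%N -> ~~ (polyfrob p i r %| h))))
  (alpha : 'F_p)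
  (a : {poly L})
  (a_g : map_poly (in_alg L) g %| a - 1)
  (a_h : forall i : nat, (i < k)%N ->
       polyfrob p i h %| a - (frobi p i (in_alg L alpha * eta))%:P) :
  (exists b : {poly 'F_p}, negmod L n %| a - map_poly (in_alg L) b) /\
  (forall b : {poly 'F_p}, negmod L n %| a - map_poly (in_alg L) b ->
     totally_isotropic n (negacyclic_span n g b)).
Proof.
set N := (p ^ (k * m))%N.
set PL := negmod L n; set P := negmod 'F_p n.
set gL := map_poly (in_alg L) g.
set c := fun i => frobi p i (in_alg L alpha * eta).
have ePL : PL = map_poly (in_alg L) P.
  by rewrite /PL /P /negmod rmorphD /= map_polyXn rmorph1.
have frobLk : forall x : L, frobi p k x = x by move=> x; rewrite -dimL frobiK.
have frobN : forall x : L, x ^+ N = x.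
  move=> x; rewrite /N expnM; elim: (m) => [|j IH]; first by rewrite expr1.
  by rewrite expnS exprM; have := frobLk x; rewrite /frobi => ->.
have oddN : odd N by rewrite /N oddX odd_p orbT.
set q := ((N + 1) %/ n)%N.
have Enq : (N + 1 = n * q)%N by rewrite /q mulnC divnK.
have evn : ~~ odd n.
  by move: (congr1 odd Enq); rewrite oddD oddN oddM odd_quot andbT /= => <-.
have nF : n%:R != 0 :> L.
  rewrite -(dvdn_pcharf pcharL); apply/negP => pn.
  have : (p %| N + 1)%N by apply: dvdn_trans pn n_dvd.
  rewrite dvdn_addr ?dvdn1; last by rewrite /N dvdn_exp ?muln_gt0 ?k_gt0.
  by move/eqP => p1; move: pr_p; rewrite p1.
have sepPL := separable_negmod L n n_gt0 nF.
have gL_PL : gL %| PL by rewrite ePL /gL dvdp_map.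
have h_PL : h %| PL by apply: dvdp_trans h_dvd (divp_dvd gL_PL).
have sh_PL : forall i, polyfrob p i h %| PL.
  by move=> i; have := pf_dvd i _ _ h_PL; rewrite /PL pf_negmod.
have block : forall r, irreducible_poly r -> r %| PL ->
    r %| gL \/ exists2 i, (i < k)%N & r %| polyfrob p i h.
  move=> r ir rP; move: rP; rewrite -(divpK gL_PL) => rP.
  case: (irr_prime _ _ _ _ ir rP) => [rQ|rg]; last by left.
  right; case: (classic (r %| h)) => [rh|nrh].
    by exists 0%N => //; rewrite pf_id // => x; rewrite frobi0.
  have [_ H2] := h_orbit r ir rQ.
  have H0 : ~ (forall i : nat, (0 < i < k)%N -> ~~ (polyfrob p i r %| h)).
    by move=> H; apply: nrh; apply: H2.
  have [i Hi] := not_all_ex_not _ _ H0.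
  have [ik Hn] := imply_to_and _ _ Hi.
  have Hd : polyfrob p i r %| h by case: (_ %| h) Hn => // /(_ isT).
  case/andP: ik => i0 ik.
  exists (k - i)%N; first by rewrite ltn_subrL i0 k_gt0.
  have := pf_dvd (k - i) _ _ Hd; rewrite pfD subnKC ?(ltnW ik) //.
  by rewrite pf_id.
have cover : forall G, gL %| G -> (forall i, (i < k)%N -> polyfrob p i h %| G) -> PL %| G.
  move=> G gG hG; apply: (sqfree_dvd _ _ _ sepPL) => r ir rP.
  case: (block r ir rP) => [rg | [i ik rh]]; first exact: dvdp_trans rg gG.
  exact: dvdp_trans rh (hG i ik).
have gL_even : gL \Po (- 'X) = gL.
  by rewrite /gL -{2}g_even map_comp_poly rmorphN /= map_polyX.
have ck : c k = c 0%N by rewrite /c frobLk frobi0.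
have props : forall a0, gL %| a0 - 1 ->
    (forall i, (i < k)%N -> polyfrob p i h %| a0 - (c i)%:P) ->
    [/\ PL %| a0 \Po (- 'X) - a0, PL %| a0 ^+ N - a0 & PL %| polyfrob p 1 a0 - a0].
  move=> a0 a0g a0h; split; apply: cover.
  - have -> : a0 \Po - 'X - a0 = (a0 - 1) \Po (- 'X) - (a0 - 1).
      by rewrite comp_polyB -polyC1 comp_polyC; ring.
    by apply: dvdp_sub => //; rewrite -{1}gL_even dvdp_comp_poly.
  - move=> i ik.
    have -> : a0 \Po - 'X - a0 = (a0 - (c i)%:P) \Po (- 'X) - (a0 - (c i)%:P).
      by rewrite comp_polyB comp_polyC; ring.
    apply: dvdp_sub; last exact: a0h.
    by rewrite -h_even pf_comp; apply: dvdp_comp_poly; apply: a0h.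
  - have -> : a0 ^+ N - a0 = (a0 ^+ N - 1 ^+ N) - (a0 - 1) by rewrite expr1n; ring.
    by apply: dvdp_sub => //; apply: dvdp_powB.
  - move=> i ik.
    have -> : a0 ^+ N - a0 = (a0 ^+ N - (c i)%:P ^+ N) - (a0 - (c i)%:P).
      by rewrite -rmorphXn frobN; ring.
    by apply: dvdp_sub; [apply: dvdp_powB|]; apply: a0h.
  - have -> : polyfrob p 1 a0 - a0 = polyfrob p 1 (a0 - 1) - (a0 - 1).
      by rewrite pf_sub1; ring.
    by apply: dvdp_sub => //; have := pf_dvd 1 _ _ a0g; rewrite /gL pf_alg.
  - move=> i ik.
    have -> : polyfrob p 1 a0 - a0 = (polyfrob p 1 a0 - (c i)%:P) - (a0 - (c i)%:P) by ring.
    apply: dvdp_sub; last exact: a0h.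
    have [j Hj] : exists j, (j < k)%N /\ (polyfrob p 1 (polyfrob p j h) = polyfrob p i h /\ frobi p 1 (c j) = c i).
      case: i ik => [|i] ik.
        exists k.-1; split; first by rewrite ltn_predL.
        rewrite pfD /c frobiD addn1 prednK // -/(c k) ck.
        by rewrite pf_id // [in RHS]pf_id // => x; rewrite frobi0.
      by exists i; rewrite (ltnW ik) pfD /c frobiD addn1.
    case: Hj => jk [<- <-]; rewrite -pf_subC; apply: pf_dvd; exact: a0h.
have [_ _ Ca] := props a a_g a_h.
have PL0 : PL != 0.
  by rewrite -size_poly_gt0 /PL /negmod size_polyDl ?size_polyXn ?size_polyC ?oner_eq0.
split.
  set a' := a %% PL.
  have fa' : polyfrob p 1 a' = a'.
    by rewrite /a' pf_modp /PL pf_negmod -/PL (modp_congr _ _ _ _ Ca).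
  have fix_i : forall i, exists t : 'F_p, in_alg L t = a'`_i.
    move=> i; apply: fixed_alg.
    by have := congr1 (fun q : {poly L} => q`_i) fa'; rewrite /= /polyfrob coef_map /= /frobi expn1.
  pose b := \poly_(i < size a') odflt 0 [pick t : 'F_p | in_alg L t == a'`_i].
  have Eb : map_poly (in_alg L) b = a'.
    apply/polyP => i; rewrite coef_map coef_poly.
    case: ltnP => [_ | si]; last first.
      by rewrite nth_default // raddf0.
    case: (pickP (fun t : 'F_p => in_alg L t == a'`_i)) => [t /eqP Ht | none].
      by rewrite /= -Ht.
    by have [t Ht] := fix_i i; move: (none t); rewrite Ht eqxx.
  exists b; rewrite Eb /a' {1}(divp_eq a PL) addrK.
  exact: dvdp_mull.
move=> b Hb.
set bL := map_poly (in_alg L) b.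
have bg : gL %| bL - 1.
  have -> : bL - 1 = (a - 1) - (a - bL) by ring.
  by apply: dvdp_sub => //; apply: dvdp_trans gL_PL Hb.
have bh : forall i, (i < k)%N -> polyfrob p i h %| bL - (c i)%:P.
  move=> i ik; have -> : bL - (c i)%:P = (a - (c i)%:P) - (a - bL) by ring.
  by apply: dvdp_sub; [apply: a_h | apply: dvdp_trans (sh_PL i) Hb].
have [HA HB _] := props bL bg bh.
have HA' : P %| b \Po (- 'X) - b.
  rewrite -(dvdp_map (in_alg L)) -ePL rmorphB /= map_comp_poly rmorphN /= map_polyX.
  exact: HA.
have HB' : P %| b ^+ N - b.
  rewrite -(dvdp_map (in_alg L)) -ePL rmorphB /= rmorphXn.
  exact: HB.
have HJ := @Jb p pr_p n N q b (k * m)%N n_gt0 erefl Enq odd_quot oddN HA' HB'.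
move=> x y [u ->] [v ->].
exact: symp0.
Qed.
End Frob.

Theorem mainTheorem10
  (p k m n : nat)
  (pr_p : prime p) (odd_p : odd p) (k_gt0 : (0 < k)%N) (m_gt0 : (0 < m)%N)
  (n_gt0 : (0 < n)%N)
  (n_dvd : (n %| p ^ (k * m) + 1)%N) (odd_quot : odd ((p ^ (k * m) + 1) %/ n))
  (L : fieldExtType 'F_p) (dimL : \dim {: L} = k)
  (eta : L) (gen_eta : <<1; eta>>%VS = fullv)
  (g : {poly 'F_p}) (h : {poly L})
  (g_dvd : g %| negmod 'F_p n)
  (g_even : g \Po (- 'X) = g)
  (g_small : forall r : {poly 'F_p}, irreducible_poly r -> r %| negmod 'F_p n ->
       ~~ (k %| (size r).-1)%N -> r %| g)
  (h_dvd : h %| negmod L n %/ map_poly (in_alg L) g)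
  (h_even : h \Po (- 'X) = h)
  (h_orbit : forall r : {poly L}, irreducible_poly r ->
       r %| negmod L n %/ map_poly (in_alg L) g ->
       (r %| h <-> (forall i : nat, (0 < i < k)%N -> ~~ (polyfrob p i r %| h))))
  (gh_coprime : coprimep (map_poly (in_alg L) g) h)
  (alpha : 'F_p) (alpha_nz : alpha != 0)
  (a : {poly L})
  (a_g : map_poly (in_alg L) g %| a - 1)
  (a_h : forall i : nat, (i < k)%N ->
       polyfrob p i h %| a - (frobi p i (in_alg L alpha * eta))%:P) :
  (exists b : {poly 'F_p}, negmod L n %| a - map_poly (in_alg L) b) /\
  (forall b : {poly 'F_p}, negmod L n %| a - map_poly (in_alg L) b ->
     totally_isotropic n (negacyclic_span n g b)).
Proof.
exact: (@main_L p pr_p L k m n odd_p k_gt0 m_gt0 n_gt0 n_dvd odd_quot dimL eta g h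
  g_dvd g_even h_dvd h_even h_orbit alpha a a_g a_h).
Qed.
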